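(* There exist differentiable functions $f_1,f_2:\mathbb{R}\to\mathbb{R}$ such that $f=\frac12(f_1+f_2)$ is bounded from below and has $1$-Lipschitz derivative, and such that for the stochastic gradient $g(x)=f_i'(x)$, where $i$ is drawn uniformly at random from $\{1,2\}$ (so $\mathbb{E}[g(x)]=f'(x)$), there are no constants $\alpha,\beta\ge 0$ with $\mathbb{E}|g(x)|^2\le \alpha |f'(x)|^2+\beta$ for all $x\in\mathbb{R}$.
   Context: The inequality $\mathbb{E}|g(x)|^2\le\alpha|f'(x)|^2+\beta$ for all $x$ is called the relaxed growth condition. *)

(* Defs.v *)
From Stdlib Require Import Reals.
From Coquelicot Require Import Coquelicot.
Open Scope R_scope.

Definition avg2 (f1 f2 : R -> R) : R -> R := fun x => (f1 x + f2 x) / 2.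

(* Stochastic gradient g(x) = f_i'(x), i uniform on {1,2}:
   E|g(x)|^2 = (|f1'(x)|^2 + |f2'(x)|^2) / 2. *)
Definition E_sq_stoch_grad (f1 f2 : R -> R) (x : R) : R :=
  (Rabs (Derive f1 x) ^ 2 + Rabs (Derive f2 x) ^ 2) / 2.

Definition E_stoch_grad (f1 f2 : R -> R) (x : R) : R :=
  (Derive f1 x + Derive f2 x) / 2.

(* Main.v *)
Require Import Defs.
From Stdlib Require Import Reals Lra Psatz.
From Coquelicot Require Import Coquelicot.
Open Scope R_scope.

Lemma D1 x : Derive (fun x => x ^ 2) x = 2 * x.
Proof. apply is_derive_unique. auto_derive; auto; ring. Qed.
Lemma D2 x : Derive (fun x => - x ^ 2) x = - (2 * x).
Proof. apply is_derive_unique. auto_derive; auto; ring. Qed.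
Lemma D0 x : Derive (avg2 (fun x => x ^ 2) (fun x => - x ^ 2)) x = 0.
Proof.
  rewrite (Derive_ext _ (fun _ => 0)). apply Derive_const.
  intro t; unfold avg2; field.
Qed.

Theorem proposition1 :
  exists f1 f2 : R -> R,
    (forall x, ex_derive f1 x) /\ (forall x, ex_derive f2 x) /\
    (exists m : R, forall x, m <= avg2 f1 f2 x) /\
    (forall x y, Rabs (Derive (avg2 f1 f2) x - Derive (avg2 f1 f2) y) <= Rabs (x - y)) /\
    (forall x, E_stoch_grad f1 f2 x = Derive (avg2 f1 f2) x) /\
    ~ (exists alpha beta : R, 0 <= alpha /\ 0 <= beta /\
         forall x, E_sq_stoch_grad f1 f2 x <= alpha * Rabs (Derive (avg2 f1 f2) x) ^ 2 + beta).
Proof.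
  exists (fun x => x ^ 2), (fun x => - x ^ 2).
  split; [intro; auto_derive; auto|].
  split; [intro; auto_derive; auto|].
  split; [exists 0; intro; unfold avg2; lra|].
  split; [intros x y; rewrite !D0; rewrite Rminus_0_r, Rabs_R0; apply Rabs_pos|].
  split; [intro x; unfold E_stoch_grad; rewrite D0, D1, D2; field|].
  intros [a [b [Ha [Hb H]]]].
  specialize (H (b + 1)). unfold E_sq_stoch_grad in H.
  rewrite D0, D1, D2, Rabs_R0 in H.
  rewrite !pow2_abs in H. nra.
Qed.
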